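(* Let $\{x_k\}$ be generated by the Subgradient-InexP method with Polyak's stepsize rule, under the standing assumptions (in particular $\Omega^*\neq\varnothing$). Then $\{x_k\}$ converges to a point $x_*\in\Omega^*$.
   Context: Problem: minimize a convex $f:\mathbb{R}^n\to\mathbb{R}$ over a nonempty closed convex $C\subset\mathbb{R}^n$; $f^*:=\inf_{x\in C}f(x)$, $\Omega^*$ the set of minimizers. For $\epsilon\ge0$, $\partial_\epsilon f(x):=\{s: f(y)\ge f(x)+\langle s,y-x\rangle-\epsilon\ \forall y\}$. Relative error tolerance function: any $\varphi_{\gamma,\theta,\lambda}:(\mathbb{R}^n)^3\to[0,\infty)$ with $\varphi_{\gamma,\theta,\lambda}(u,v,w)\le\gamma\|v-u\|^2+\theta\|w-v\|^2+\lambda\|w-u\|^2$; for $u\in C$, $\mathcal{P}_C(\varphi_{\gamma,\theta,\lambda},u,v):=\{w\in C:\langle v-w,z-w\rangle\le\varphi_{\gamma,\theta,\lambda}(u,v,w)\ \forall z\in C\}$. Subgradient-InexP method: $x_0\in C$; at iteration $k$, if $0\in\partial f(x_k)$ stop; otherwise choose nonzero $s_k\in\partial_{\epsilon_k}f(x_k)$, stepsize $t_k>0$, and $x_{k+1}\in\mathcal{P}_C(\varphi_{\gamma_k,\theta_k,\lambda_k},x_k,x_k-t_ks_k)$. Standing assumptions: $\gamma_k\in[0,\bar\gamma)$, $\theta_k\in[0,\bar\theta)$, $\lambda_k\in[0,\bar\lambda)$ with $\bar\gamma\ge0$, $\bar\theta,\bar\lambda\in[0,1/2)$; the sequence is infinite.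 Let $\nu:=\frac{1+2\bar\gamma}{1-2\bar\lambda}$. Polyak's stepsize rule: $\Omega^*\neq\varnothing$, $f^*>-\infty$ known; $\mu\ge0$, $\underline\beta>0$, $\bar\beta>0$; $\{\epsilon_k\}$ nonincreasing, $0<\underline\beta\le\beta_k\le\bar\beta<\frac{1}{2\mu+\nu}$ and $0<\epsilon_k\le\mu\beta_k[f(x_k)-f^*]$ for all $k$; $t_k:=\beta_k\frac{f(x_k)-f^*}{\|s_k\|^2}$. *)

(* Defs.v *)
From HB Require Import structures.
From mathcomp Require Import all_boot all_order all_algebra.
From mathcomp Require Import all_classical all_reals all_analysis.
Set Implicit Arguments. Unset Strict Implicit. Unset Printing Implicit Defensive.
Import Order.TTheory GRing.Theory Num.Theory.
Import numFieldNormedType.Exports.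
Local Open Scope classical_set_scope.
Local Open Scope ring_scope.

Section Defs.
Variables (R : realType) (n : nat).
Local Notation V := 'rV[R]_n.

Definition dotv (u v : V) : R := \sum_(i < n) u ord0 i * v ord0 i.
Definition normv (u : V) : R := Num.sqrt (dotv u u).

Definition convex_funV (f : V -> R) : Prop :=
  forall (x y : V) (t : R), 0 <= t -> t <= 1 ->
    f (t *: x + (1 - t) *: y) <= t * f x + (1 - t) * f y.

Definition convex_setV (C : set V) : Prop :=
  forall (x y : V) (t : R), C x -> C y -> 0 <= t -> t <= 1 ->
    C (t *: x + (1 - t) *: y).

Definition eps_subdiff (f : V -> R) (eps : R) (x : V) : set V :=
  [set s | forall y : V, f y >= f x + dotv s (y - x) - eps].

Definition rel_err_tol (g th l : R) (phi : V -> V -> V -> R) : Prop :=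
  forall u v w : V, 0 <= phi u v w /\
    phi u v w <= g * normv (v - u) ^+ 2 + th * normv (w - v) ^+ 2
                 + l * normv (w - u) ^+ 2.

Definition inexP (C : set V) (phi : V -> V -> V -> R) (u v : V) : set V :=
  [set w | C w /\ forall z : V, C z -> dotv (v - w) (z - w) <= phi u v w].

End Defs.

(* Main.v *)
Require Import Defs.
From HB Require Import structures.
From mathcomp Require Import all_boot all_order all_algebra.
From mathcomp Require Import all_classical all_reals all_analysis.
From mathcomp Require Import ring lra.
Import Order.TTheory GRing.Theory Num.Theory.
Import numFieldNormedType.Exports.
Local Open Scope classical_set_scope.
Local Open Scope ring_scope.

Set Implicit Arguments. Unset Strict Implicit.

Section Dot.
Variables (R : realType) (n : nat).
Local Notation V := 'rV[R]_n.
Implicit Types u v w : V.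

Lemma dotvC u v : dotv u v = dotv v u.
Proof. by apply: eq_bigr => i _; rewrite mulrC. Qed.
Lemma dotvDl u v w : dotv (u + v) w = dotv u w + dotv v w.
Proof. by rewrite /dotv -big_split; apply: eq_bigr => i _; rewrite !mxE mulrDl. Qed.
Lemma dotvNl u w : dotv (- u) w = - dotv u w.
Proof. by rewrite /dotv -sumrN; apply: eq_bigr => i _; rewrite !mxE mulNr. Qed.
Lemma dotvZl (a : R) u w : dotv (a *: u) w = a * dotv u w.
Proof. by rewrite /dotv mulr_sumr; apply: eq_bigr => i _; rewrite !mxE mulrA. Qed.
Lemma dotvBl u v w : dotv (u - v) w = dotv u w - dotv v w.
Proof. by rewrite dotvDl dotvNl. Qed.
Lemma dotvDr u v w : dotv w (u + v) = dotv w u + dotv w v.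
Proof. by rewrite dotvC dotvDl !(dotvC w). Qed.
Lemma dotvBr u v w : dotv w (u - v) = dotv w u - dotv w v.
Proof. by rewrite dotvC dotvBl !(dotvC w). Qed.
Lemma dotvZr (a : R) u w : dotv w (a *: u) = a * dotv w u.
Proof. by rewrite dotvC dotvZl dotvC. Qed.
Lemma dotvv_ge0 u : 0 <= dotv u u.
Proof. by apply: sumr_ge0 => i _; rewrite -expr2 sqr_ge0. Qed.
Lemma normv2 u : normv u ^+ 2 = dotv u u.
Proof. by rewrite sqr_sqrtr // dotvv_ge0. Qed.
Lemma dotvv_eq0 u : dotv u u = 0 -> u = 0.
Proof.
move=> /eqP; rewrite psumr_eq0; last by move=> i _; rewrite -expr2 sqr_ge0.
move=> /allP H; apply/rowP => i; rewrite mxE.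
by have := H i (mem_index_enum _); rewrite -expr2 sqrf_eq0 => /eqP.
Qed.
Lemma coord_sq u i : u ord0 i ^+ 2 <= dotv u u.
Proof.
rewrite /dotv (bigD1 i) //= -expr2 lerDl.
by apply: sumr_ge0 => j _; rewrite -expr2 sqr_ge0.
Qed.
Lemma coord_le u i : `|u ord0 i| <= Num.sqrt (dotv u u).
Proof.
by rewrite -sqrtr_sqr ler_sqrt ?coord_sq // dotvv_ge0.
Qed.
Lemma dotv_le_mx u : dotv u u <= n%:R * `|u| ^+ 2.
Proof.
rewrite /dotv; apply: (@le_trans _ _ (\sum_(i < n) `|u| ^+ 2)); last first.
  by rewrite sumr_const card_ord mulr_natl.
apply: ler_sum => i _; rewrite -expr2 -real_normK ?num_real //.
rewrite lerXn2r ?nnegrE ?normr_ge0 //.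
rewrite [leRHS]/Num.norm /= mx_normrE; apply/bigmax_geP; right => /=; exists (ord0, i) => //.
Qed.
Lemma mx_le_coord u e : 0 <= e -> (forall i, `|u ord0 i| <= e) -> `|u| <= e.
Proof.
move=> e0 H; rewrite [leLHS]/Num.norm /= mx_normrE; apply/bigmax_leP; split => // -[a b] _ /=.
by rewrite (ord1 a).
Qed.
End Dot.


Section Box.
Variables (R : realType) (n : nat).
Local Notation V := 'rV[R]_n.

Lemma box_bound (f : V -> R) (c : V) (M : R) : convex_funV f -> 0 < M ->
  exists B, forall v : V, (forall i, `|v ord0 i - c ord0 i| <= M) -> f v <= B.
Proof.
move=> cvf M0.
pose vert (b : {ffun 'I_n -> bool}) : V := c + \row_i (if b i then M else - M).
exists (\sum_(b : {ffun 'I_n -> bool}) `|f (vert b)|).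
set B := \sum_(b : _) _.
suff Q : forall k, forall v : V, (forall i, `|v ord0 i - c ord0 i| <= M) ->
  (forall i : 'I_n, (k <= i)%N -> `|v ord0 i - c ord0 i| = M) -> f v <= B.
  by move=> v hv; apply: (Q n) => // i; rewrite leqNgt ltn_ord.
elim=> [|k IH] v hb hv.
  pose b := [ffun i => 0 < v ord0 i - c ord0 i].
  have -> : v = vert b.
    apply/rowP => i; rewrite !mxE ffunE.
    have := hv i (leq0n _).
    case: ltrP => hd.
      by rewrite gtr0_norm // => <-; rewrite addrC subrK.
    by rewrite ler0_norm // => <-; rewrite opprK addrC subrK.
  apply: le_trans (ler_norm _) _.
  rewrite /B (bigD1 b) //= lerDl; apply: sumr_ge0 => *; exact: normr_ge0.
case: (ltnP k n) => kn; last first.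
  apply: IH => // i ki; apply: hv; move: (ltn_ord i) => iln.
  by exfalso; move: ki; rewrite leqNgt; move/negP; apply; apply: leq_trans iln kn.
pose i0 := Ordinal kn.
pose d := v ord0 i0 - c ord0 i0.
pose vs (a : R) : V := \row_j (if j == i0 then c ord0 j + a else v ord0 j).
have hvs : forall a, `|a| = M -> f (vs a) <= B.
  move=> a ha; apply: IH.
    move=> j; rewrite mxE; case: eqP => [->|_]; last exact: hb.
    by rewrite addrC addKr ha.
  move=> j kj; rewrite mxE; case: eqP => [->|/eqP jn]; first by rewrite addrC addKr ha.
  apply: hv; rewrite ltn_neqAle kj andbT; apply/eqP => ek; move/eqP: jn; apply.
  by apply/val_inj; rewrite /= ek.
pose t := (M - d) / (2 * M).
have hd : `|d| <= M by exact: hb.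
have [hd1 hd2] : - M <= d /\ d <= M by move: hd; rewrite ler_norml => /andP.
have t0 : 0 <= t by rewrite /t divr_ge0 // ?subr_ge0 // mulr_ge0 // ltW.
have t1 : t <= 1 by rewrite /t ler_pdivrMr ?mulr_gt0 //; lra.
have ev : v = t *: vs (- M) + (1 - t) *: vs M.
  apply/rowP => j; rewrite !mxE; case: eqP => [->|_]; last by lra.
  rewrite /t /d; field; lra.
rewrite ev; apply: le_trans (cvf _ _ _ t0 t1) _.
have h1 : f (vs (- M)) <= B by apply: hvs; rewrite normrN gtr0_norm.
have h2 : f (vs M) <= B by apply: hvs; rewrite gtr0_norm.
have : t * f (vs (- M)) <= t * B by rewrite ler_wpM2l.
have : (1 - t) * f (vs M) <= (1 - t) * B by rewrite ler_wpM2l // subr_ge0.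
lra.
Qed.
End Box.


Section Step.
Variables (R : realType) (n : nat).
Local Notation V := 'rV[R]_n.

Lemma dotvNr (u w : V) : dotv w (- u) = - dotv w u.
Proof. by rewrite dotvC dotvNl dotvC. Qed.

Lemma expandB (p q : V) : dotv (q - p) (q - p) = dotv q q - 2 * dotv p q + dotv p p.
Proof. rewrite dotvBl !dotvBr (dotvC q p); lra. Qed.

Lemma ident (v w z : V) :
  dotv (w - z) (w - z) = dotv (v - z) (v - z) - dotv (v - w) (v - w)
     + 2 * dotv (v - w) (z - w).
Proof.
have -> : w - z = (v - z) - (v - w) by rewrite opprB [RHS]addrC addrA subrK.
have -> : z - w = (v - w) - (v - z) by rewrite opprB [RHS]addrC addrA subrK.
rewrite expandB (dotvBr (v - w) (v - z) (v - w)); lra.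
Qed.

Lemma fejer_step (f : V -> R) (fstar : R) (z u w s : V)
  (t eps beta gam th lam nu mu phiv : R) :
  f z = fstar ->
  eps_subdiff f eps u s ->
  dotv ((u - t *: s) - w) (z - w) <= phiv ->
  dotv ((u - t *: s) - w) (u - w) <= phiv ->
  phiv <= gam * normv ((u - t *: s) - u) ^+ 2 + th * normv (w - (u - t *: s)) ^+ 2
          + lam * normv (w - u) ^+ 2 ->
  0 <= gam -> 0 <= th -> th < 2^-1 -> 0 <= lam -> lam < 2^-1 ->
  1 + 2 * gam <= nu * (1 - 2 * lam) ->
  s != 0 -> t = beta * (f u - fstar) / normv s ^+ 2 -> 0 <= beta ->
  beta * (2 * mu + nu) <= 1 -> eps <= mu * beta * (f u - fstar) ->
  fstar <= f u -> 0 <= mu ->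
  dotv (w - z) (w - z) <= dotv (u - z) (u - z) - t * (f u - fstar).
Proof.
move=> fz sub h1 h2 hphi g0 th0 th1 l0 l1 hnu s0 ht b0 hb he fu mu0.
set v := u - t *: s in h1 h2 hphi *.
rewrite !normv2 -/v in hphi.
have Ns0 : 0 < dotv s s.
  rewrite lt_def dotvv_ge0 andbT; apply/eqP => /dotvv_eq0 /eqP; exact/negP.
rewrite normv2 in ht.
set D := f u - fstar in ht he fu *.
have D0 : 0 <= D by rewrite /D subr_ge0.
have tNs : t * dotv s s = beta * D by rewrite ht divfK // gt_eqF.
have t0 : 0 <= t by rewrite ht divr_ge0 ?mulr_ge0 // dotvv_ge0.
have hA : dotv (v - u) (v - u) = t ^+ 2 * dotv s s.
  have -> : v - u = - (t *: s) by rewrite /v addrAC subrr add0r.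
  by rewrite dotvNl dotvNr opprK dotvZl dotvZr mulrA expr2.
have hQ : dotv (w - v) (w - v) = dotv (v - w) (v - w).
  by rewrite -opprB dotvNl dotvNr opprK.
have hVz : dotv (v - z) (v - z) = dotv (u - z) (u - z) - 2 * t * dotv (u - z) s
     + t ^+ 2 * dotv s s.
  have -> : v - z = (u - z) - t *: s by rewrite /v addrAC.
  rewrite (expandB (t *: s) (u - z)) !dotvZl !dotvZr (dotvC s (u - z)) expr2; ring.
have hsub : dotv (u - z) s >= D - eps.
  have := sub z; rewrite fz -(opprB u z) dotvNr (dotvC s) /D; lra.
rewrite hA hQ in hphi.
have iZ := ident v w z.
have iP := ident v w u.
rewrite hA in iP.
set A := t ^+ 2 * dotv s s in hphi iP.
have A0 : 0 <= A by rewrite /A mulr_ge0 ?sqr_ge0 ?dotvv_ge0.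
set Q := dotv (v - w) (v - w) in hphi iZ iP.
have Q0 : 0 <= Q by exact: dotvv_ge0.
set P := dotv (w - u) (w - u) in hphi iP.
set Z := dotv (w - z) (w - z) in iZ *.
have thQ : 2 * (th * Q) <= Q.
  rewrite mulrA -[leRHS]mul1r ler_wpM2r //.
  by move: th1; rewrite -(ltr_pM2l (_ : 0 < 2)) // mulfV // => /ltW.
have hP : (1 - 2 * lam) * P <= (1 + 2 * gam) * A by lra.
have hZ : Z <= dotv (v - z) (v - z) + 2 * gam * A + 2 * lam * P by lra.
have l2 : 0 < 1 - 2 * lam.
  by move: l1; rewrite -(ltr_pM2l (_ : 0 < 2)) // mulfV // subr_gt0.
have hZ2 : (1 - 2 * lam) * (Z - dotv (v - z) (v - z)) <= (1 - 2 * lam) * ((nu - 1) * A).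
  have e1 : (1 - 2 * lam) * (Z - dotv (v - z) (v - z)) <=
      (1 - 2 * lam) * (2 * gam * A + 2 * lam * P).
    by apply: ler_wpM2l; [exact: ltW | lra].
  apply: le_trans e1 _.
  have e2 : (2 * lam) * ((1 - 2 * lam) * P) <= (2 * lam) * ((1 + 2 * gam) * A).
    by apply: ler_wpM2l; [lra | lra].
  have e3 : (1 + 2 * gam) * A <= nu * (1 - 2 * lam) * A by rewrite ler_wpM2r.
  nra.
have hZ3 : Z - dotv (v - z) (v - z) <= (nu - 1) * A.
  by move: hZ2; rewrite ler_pM2l.
rewrite hVz in hZ3.
have : t * (D - eps) <= t * dotv (u - z) s by rewrite ler_wpM2l.
have : t * eps <= t * (mu * beta * D) by rewrite ler_wpM2l.
have hA' : A = t * (beta * D) by rewrite /A -tNs expr2 mulrA.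
rewrite hA' in hZ3.
have : t * D * (beta * (2 * mu + nu)) <= t * D * 1 by rewrite ler_wpM2l ?mulr_ge0.
move: hZ3; set td := t * dotv (u - z) s; set Nuz := dotv (u - z) (u - z).
nra.
Qed.
End Step.


Section Topo.
Variables (R : realType) (n : nat).
Local Notation V := 'rV[R]_n.

Lemma coord_le_mx (u : V) i : `|u ord0 i| <= `|u|.
Proof.
rewrite [leRHS]/Num.norm /= mx_normrE; apply/bigmax_geP; right => /=; exists (ord0, i) => //.
Qed.

Lemma cluster_freq (x : nat -> V) (xb : V) (P : nat -> Prop) (e : R) :
  cluster (x @ \oo) xb -> (\forall k \near \oo, P k) -> 0 < e ->
  exists k, P k /\ `|xb - x k| < e.
Proof.
move=> cl hP e0.
have := cl (x @` [set k | P k]) (ball xb e) _ (nbhsx_ballx _ _ e0).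
case.
  by apply: filterS hP => k Pk; exists k.
move=> y [[k Pk <-]]; rewrite -ball_normE /=; by exists k.
Qed.

Lemma c_to0 (c : nat -> R) (Bd : R) : (forall k, 0 <= c k) ->
  (forall K, \sum_(0 <= k < K) c k <= Bd) ->
  forall eta, 0 < eta -> \forall k \near \oo, c k < eta.
Proof.
move=> c0 hB eta eta0.
have cv : cvgn (series c).
  apply: nondecreasing_is_cvgn.
    by apply: (@nondecreasing_series _ c xpredT 0) => *; exact: c0.
  by exists Bd => _ [K _ <-]; exact: hB.
have := cvg_series_cvg_0 cv.
move/cvgrPdist_lt => /(_ eta eta0); apply: filterS => k.
by rewrite sub0r normrN ger0_norm.
Qed.
End Topo.


Unset Implicit Arguments. Set Strict Implicit.

Theorem mainTheorem8 (R : realType) (n : nat)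
  (f : 'rV[R]_n -> R) (C : set 'rV[R]_n) (fstar : R)
  (gbar thbar lbar mu blow bbar : R)
  (gam th lam eps beta t : nat -> R)
  (phi : nat -> 'rV[R]_n -> 'rV[R]_n -> 'rV[R]_n -> R)
  (x s : nat -> 'rV[R]_n) :
  (* problem data *)
  convex_funV f -> C !=set0 -> closed C -> convex_setV C ->
  (* Omega^* nonempty and fstar = inf_C f *)
  (exists xm, C xm /\ f xm = fstar) ->
  (forall z, C z -> fstar <= f z) ->
  (* standing assumptions on the tolerance parameters *)
  0 <= gbar -> 0 <= thbar < 2^-1 -> 0 <= lbar < 2^-1 ->
  (forall k, 0 <= gam k < gbar) ->
  (forall k, 0 <= th k < thbar) ->
  (forall k, 0 <= lam k < lbar) ->
  (forall k, rel_err_tol (gam k) (th k) (lam k) (phi k)) ->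
  (* the method; the sequence is infinite *)
  C (x 0%N) ->
  (forall k, ~ (eps_subdiff f 0 (x k) 0)) ->
  (forall k, s k != 0 /\ eps_subdiff f (eps k) (x k) (s k)) ->
  (forall k, inexP C (phi k) (x k) (x k - t k *: s k) (x k.+1)) ->
  (* Polyak's stepsize rule *)
  0 <= mu -> 0 < blow -> 0 < bbar ->
  (forall k, eps k.+1 <= eps k) ->
  (forall k, blow <= beta k <= bbar) ->
  bbar < 1 / (2 * mu + (1 + 2 * gbar) / (1 - 2 * lbar)) ->
  (forall k, 0 < eps k <= mu * beta k * (f (x k) - fstar)) ->
  (forall k, t k = beta k * (f (x k) - fstar) / normv (s k) ^+ 2) ->
  exists xs : 'rV[R]_n, (C xs /\ f xs = fstar) /\ x @ \oo --> xs.
Proof.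
move=> fcvx Cne Ccl Ccvx [xm [Cxm fxm]] fmin g0 /andP[tb0 tb1] /andP[lb0 lb1]
  hgam hth hlam hphi Cx0 hnot hs hproj mu0 blow0 bbar0 hepsdec hbeta hbbar hepsk ht.
have Cx : forall k, C (x k) by elim => // k _; case: (hproj k).
have fge : forall k, fstar <= f (x k) by move=> k; exact: fmin.
have l2 : 0 < 1 - 2 * lbar.
  by move: lb1; rewrite -(ltr_pM2l (_ : 0 < 2)) // mulfV // subr_gt0.
set nu := (1 + 2 * gbar) / (1 - 2 * lbar) in hbbar.
have nuE : nu * (1 - 2 * lbar) = 1 + 2 * gbar by rewrite /nu divfK // gt_eqF.
have nu1 : 1 <= nu by rewrite /nu ler_pdivlMr // mul1r; lra.
have hnu : forall k, 1 + 2 * gam k <= nu * (1 - 2 * lam k).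
  move=> k; case/andP: (hgam k) => g0k gk; case/andP: (hlam k) => l0k lk.
  have : nu * (1 - 2 * lbar) <= nu * (1 - 2 * lam k).
    by apply: ler_wpM2l; lra.
  lra.
have K0 : 0 < 2 * mu + nu by lra.
have hb : forall k, beta k * (2 * mu + nu) <= 1.
  move=> k; case/andP: (hbeta k) => _ bk.
  have : bbar * (2 * mu + nu) < 1 by rewrite -ltr_pdivlMr // mul1r; rewrite mul1r in hbbar.
  have : beta k * (2 * mu + nu) <= bbar * (2 * mu + nu) by rewrite ler_pM2r.
  lra.
have bet0 : forall k, 0 <= beta k.
  by move=> k; case/andP: (hbeta k) => h _; apply: le_trans h; exact: ltW.
have fej : forall z, C z -> f z = fstar -> forall k,
    dotv (x k.+1 - z) (x k.+1 - z) <= dotv (x k - z) (x k - z) - t k * (f (x k) - fstar).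
  move=> z Cz fz k; case: (hproj k) => Cx1 hp.
  case: (hphi k (x k) (x k - t k *: s k) (x k.+1)) => ph0 phle.
  case: (hs k) => s0 sub.
  case/andP: (hgam k) => g0k _; case/andP: (hth k) => t0k tk; case/andP: (hlam k) => l0k lk.
  apply: (fejer_step fz sub (hp z Cz) (hp _ (Cx k)) phle g0k t0k _ l0k _ (hnu k) s0 (ht k)
    (bet0 k) (hb k) _ (fge k) mu0).
  - exact: lt_trans tk tb1.
  - exact: lt_trans lk lb1.
  - by case/andP: (hepsk k).
have c0 : forall k, 0 <= t k * (f (x k) - fstar).
  move=> k; rewrite ht mulr_ge0 ?divr_ge0 ?mulr_ge0 ?subr_ge0 ?exprn_ge0 ?sqrtr_ge0 //.
have mono : forall z, C z -> f z = fstar -> forall k m, (k <= m)%N ->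
    dotv (x m - z) (x m - z) <= dotv (x k - z) (x k - z).
  move=> z Cz fz k0; elim => [|m IH]; first by rewrite leqn0 => /eqP ->.
  rewrite leq_eqVlt => /orP [/eqP -> //|km].
  rewrite ltnS in km; apply: le_trans (IH km). have := fej z Cz fz m; have := c0 m; lra.
have sumc : forall K, \sum_(0 <= k < K) t k * (f (x k) - fstar) <= dotv (x 0%N - xm) (x 0%N - xm).
  suff H : forall K, \sum_(0 <= k < K) t k * (f (x k) - fstar) + dotv (x K - xm) (x K - xm)
      <= dotv (x 0%N - xm) (x 0%N - xm).
    move=> K; apply: le_trans (H K); rewrite lerDl; exact: dotvv_ge0.
  elim => [|K IH]; first by rewrite big_geq // add0r.
  rewrite big_nat_recr //=; have := fej xm Cxm fxm K; lra.
set r := Num.sqrt (dotv (x 0%N - xm) (x 0%N - xm)).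
have r0 : 0 <= r by exact: sqrtr_ge0.
have crd : forall k i, `|x k ord0 i - xm ord0 i| <= r.
  move=> k i; have := coord_le (x k - xm) i; rewrite !mxE => /le_trans; apply.
  by rewrite ler_sqrt ?dotvv_ge0 // (mono xm Cxm fxm 0%N k).
have r1 : 0 < r + 1 by lra.
have [B hB] := box_bound xm fcvx r1.
have epsle : forall k, eps k <= eps 0%N.
  elim => // k IH; exact: le_trans (hepsdec k) IH.
set S := B - fstar + eps 0%N.
have sb : forall k, normv (s k) <= S.
  move=> k; case: (hs k) => s0 sub.
  set ns := normv (s k).
  have Ns0 : 0 < dotv (s k) (s k).
    rewrite lt_def dotvv_ge0 andbT; apply/eqP => /dotvv_eq0 /eqP; exact/negP.
  have ns0 : 0 < ns by rewrite /ns /normv sqrtr_gt0.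
  set y := x k + ns^-1 *: s k.
  have fy : f y <= B.
    apply: hB => i; rewrite !mxE.
    have h1 := crd k i.
    have h2 : `|s k ord0 i| <= ns by exact: coord_le.
    rewrite addrAC; apply: le_trans (ler_normD _ _) _.
    rewrite normrM gtr0_norm ?invr_gt0 //.
    have : ns^-1 * `|s k ord0 i| <= 1.
      by rewrite ler_pdivrMl // mulr1.
    lra.
  have := sub y.
  have -> : y - x k = ns^-1 *: s k by rewrite /y addrC addKr.
  rewrite dotvZr -normv2 -/ns expr2 mulrA mulVf ?gt_eqF // mul1r.
  have := fge k; have := epsle k; rewrite /S; lra.
have S0 : 0 < S.
  case: (hs 0%N) => s0 _.
  have Ns0 : 0 < dotv (s 0%N) (s 0%N).
    rewrite lt_def dotvv_ge0 andbT; apply/eqP => /dotvv_eq0 /eqP; exact/negP.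
  by apply: lt_le_trans (sb 0%N); rewrite /normv sqrtr_gt0.
have Dbnd : forall k, blow * (f (x k) - fstar) ^+ 2 <= S ^+ 2 * (t k * (f (x k) - fstar)).
  move=> k; case: (hs k) => s0 _.
  have Ns0 : 0 < dotv (s k) (s k).
    rewrite lt_def dotvv_ge0 andbT; apply/eqP => /dotvv_eq0 /eqP; exact/negP.
  have tN : t k * dotv (s k) (s k) = beta k * (f (x k) - fstar).
    by rewrite ht normv2 divfK // gt_eqF.
  have NS : dotv (s k) (s k) <= S ^+ 2.
    have h := sb k; have h0 : 0 <= normv (s k) by exact: sqrtr_ge0.
    rewrite -normv2 !expr2; nra.
  have e1 : dotv (s k) (s k) * (t k * (f (x k) - fstar)) <= S ^+ 2 * (t k * (f (x k) - fstar)).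
    by apply: ler_wpM2r.
  apply: le_trans e1; rewrite mulrA (mulrC (dotv _ _)) tN -mulrA -expr2.
  apply: ler_wpM2r; first by rewrite sqr_ge0.
  by case/andP: (hbeta k).
set A := C `&` closed_ball_ Num.norm xm r.
have clA : closed A by apply: closedI => //; exact: closed_closed_ball_.
have bA : bounded_set A.
  change (\forall M0 \near +oo, globally A [set y | `|y| <= M0]).
  near=> M0 => y [_ Ay].
  rewrite /closed_ball_ /= in Ay.
  have : `|y| <= `|xm| + `|xm - y|.
    have e : y = xm - (xm - y) by rewrite opprB addrC subrK.
    by rewrite {1}e; apply: ler_normB.
  move=> h; apply: le_trans h _; apply: (@le_trans _ _ (`|xm| + r)).
    by rewrite lerD2l.
  near: M0.
  apply: nbhs_pinfty_ge; exact: num_real.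
have Ax : forall k, A (x k).
  move=> k; split; first exact: Cx.
  rewrite /closed_ball_ /=; apply: mx_le_coord => // i.
  by rewrite !mxE distrC; exact: crd.
have cA := bounded_closed_compact bA clA.
have FA : (x @ \oo) A by exists 0%N => // k _; apply: Ax.
have [xb [Axb clxb]] := cA _ _ FA.
have Cxb : C xb by case: Axb.
have fB : fstar <= B.
  rewrite -fxm; apply: hB => i; rewrite subrr normr0; exact: ltW.
have fxb : f xb = fstar.
  apply/eqP; rewrite eq_le fmin // andbT leNgt; apply/negP => hlt.
  set de := f xb - fstar.
  have de0 : 0 < de by rewrite /de subr_gt0.
  set K := B - fstar + 1.
  have K0' : 0 < K by rewrite /K; lra.
  set la := de / (de + 4 * K).
  have dK : 0 < de + 4 * K by lra.
  have la0 : 0 < la by rewrite /la divr_gt0.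
  have la1 : la <= 1 by rewrite /la ler_pdivrMr // mul1r; lra.
  have laK : la * K <= de / 4.
    rewrite /la mulrAC ler_pdivrMr //.
    have -> : de / 4 * (de + 4 * K) = de * de / 4 + de * K by field.
    have : 0 <= de * de / 4 by rewrite divr_ge0 // mulr_ge0 // ltW.
    lra.
  set eta := blow * (de / 2) ^+ 2 / S ^+ 2.
  have eta0 : 0 < eta by rewrite /eta divr_gt0 ?mulr_gt0 ?exprn_gt0 ?divr_gt0.
  have [k [ck hk]] := cluster_freq clxb (c_to0 c0 sumc eta0) la0.
  have Dk : f (x k) - fstar < de / 2.
    have h1 := Dbnd k.
    have h2 : S ^+ 2 * (t k * (f (x k) - fstar)) < S ^+ 2 * eta.
      by rewrite ltr_pM2l // exprn_gt0.
    have h3 : S ^+ 2 * eta = blow * (de / 2) ^+ 2.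
      by rewrite /eta mulrC divfK // gt_eqF // exprn_gt0.
    have h4 : (f (x k) - fstar) ^+ 2 < (de / 2) ^+ 2.
      rewrite -(ltr_pM2l blow0); lra.
    move: h4; rewrite ltr_pXn2r // ?nnegrE ?subr_ge0 ?fge //.
    by rewrite divr_ge0 // ltW.
  set z := x k + la^-1 *: (xb - x k).
  have fz : f z <= B.
    apply: hB => i; rewrite !mxE.
    have h1 := crd k i.
    have h2 : `|xb ord0 i - x k ord0 i| <= la.
      apply: le_trans (ltW hk); have := coord_le_mx (xb - x k) i; by rewrite !mxE.
    rewrite addrAC; apply: le_trans (ler_normD _ _) _.
    rewrite normrM gtr0_norm ?invr_gt0 //.
    have : la^-1 * `|xb ord0 i - x k ord0 i| <= 1.
      by rewrite ler_pdivrMl // mulr1.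
    lra.
  have exb : xb = la *: z + (1 - la) *: x k.
    by apply/rowP => i; rewrite !mxE; field; rewrite gt_eqF.
  have := fcvx z (x k) la (ltW la0) la1; rewrite -exb.
  have : la * f z <= la * B by rewrite ler_pM2l.
  have : (1 - la) * f (x k) <= (1 - la) * f (x k) by [].
  have : la * B <= la * fstar + la * K by rewrite -mulrDr ler_pM2l // /K; lra.
  have : la * f (x k) >= la * fstar by rewrite ler_pM2l // fge.
  rewrite /de in de0 laK Dk.
  nra.
exists xb; split; first by [].
apply/cvgrPdist_lt => e e0.
set e' := e / (n.+1)%:R.
have e'0 : 0 < e' by rewrite /e' divr_gt0 // ltr0n.
have hT : \forall k \near \oo, True by exists 0%N.
have [k0 [_ hk0]] := cluster_freq clxb hT e'0.
set rho := Num.sqrt (dotv (x k0 - xb) (x k0 - xb)).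
have rho0 : 0 <= rho by exact: sqrtr_ge0.
have rhoe : rho < e.
  have h1 := dotv_le_mx (x k0 - xb).
  rewrite distrC in hk0.
  have h2 : `|x k0 - xb| ^+ 2 <= e' ^+ 2.
    rewrite !expr2; have := normr_ge0 (x k0 - xb); nra.
  have h3 : n%:R * e' ^+ 2 < e ^+ 2.
    rewrite /e' expr_div_n mulrA ltr_pdivrMr ?exprn_gt0 ?ltr0n //.
    rewrite mulrC ltr_pM2l ?exprn_gt0 // -natrX ltr_nat.
    by rewrite expnS mulSn addSn ltnS leq_addr.
  have h4 : rho ^+ 2 < e ^+ 2.
    rewrite /rho sqr_sqrtr ?dotvv_ge0 //.
    apply: le_lt_trans h3; apply: le_trans h1 _.
    by apply: ler_wpM2l.
  by move: h4; rewrite ltr_pXn2r // ?nnegrE // ltW.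
near=> k.
have k0k : (k0 <= k)%N by near: k; exact: nbhs_infty_ge.
apply: le_lt_trans rhoe; apply: mx_le_coord => // i.
rewrite !mxE distrC; have := coord_le (x k - xb) i; rewrite !mxE => /le_trans; apply.
by rewrite ler_sqrt ?dotvv_ge0 // (mono xb Cxb fxb k0 k).
Unshelve. all: by end_near.
Qed.
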